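(* Let $F\in\mathbb{Z}[x_1,\dots,x_n]$ be an integral form in $n$ variables of degree greater than one. Suppose that there exist integers $a_1,\dots,a_{n-1}$ for which the one-variable polynomial $F(x,a_1,\dots,a_{n-1})\in\mathbb{Z}[x]$ has non-zero discriminant. Then $R(F)$ is dense in $\mathbb{Q}_p$ for infinitely many primes $p$.
   Context: A form is a homogeneous polynomial; it is integral if its coefficients lie in $\mathbb{Z}$. For an integral form $F$ in $r$ variables, its ratio set is $R(F)=\{F(\overline{x})/F(\overline{y}) : \overline{x},\overline{y}\in\mathbb{Z}^r,\ F(\overline{y})\neq 0\}\subseteq\mathbb{Q}$, and density refers to the $p$-adic topology on $\mathbb{Q}_p$. The discriminant of $f(x)=a_mx^m+\dots+a_0$ is $a_m^{2m-2}\prod_{i<j}(r_i-r_j)^2$, where $r_1,\dots,r_m$ are the roots of $f$ in an algebraic closure. *)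

(* Defs.v *)
From HB Require Import structures.
From mathcomp Require Import all_boot all_order all_algebra all_field.
From mathcomp Require Import mpoly.
Set Implicit Arguments. Unset Strict Implicit. Unset Printing Implicit Defensive.
Import Order.TTheory GRing.Theory Num.Theory.
Local Open Scope ring_scope.

Definition padic_val (p : nat) (q : rat) : int :=
  (logn p `|numq q|%N)%:Z - (logn p `|denq q|%N)%:Z.

(* |x - y|_p <= p^-k, i.e. x = y or v_p(x - y) >= k. *)
Definition padic_close (p : nat) (k : int) (x y : rat) : Prop :=
  x = y \/ (k <= padic_val p (x - y))%R.

(* A subset S of Q is dense in Q_p: since Q is dense in Q_p, this is
   equivalent to: every rational is a p-adic limit of elements of S. *)
Definition padic_dense (p : nat) (S : rat -> Prop) : Prop :=
  forall (q : rat) (k : int), exists s, S s /\ padic_close p k s q.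

Definition ratio_set (r : nat) (F : {mpoly int[r]}) : rat -> Prop :=
  fun t => exists (x y : 'I_r -> int),
      F.@[y] != 0 /\ t = (F.@[x])%:~R / (F.@[y])%:~R.

(* Convention: constant polynomials get 0. *)
Definition disc (f : {poly int}) : algC :=
  let g := map_poly (fun z : int => z%:~R : algC) f in
  let rs := sval (closed_field_poly_normal g) in
  let m := (size f).-1 in
  if (m == 0)%N then 0 else
  lead_coef g ^+ (2 * m - 2) *
    \prod_(i < size rs) \prod_(j < size rs | (i < j)%N) (rs`_i - rs`_j) ^+ 2.

Definition specialize_first (n : nat) (F : {mpoly int[n.+1]})
    (a : 'I_n -> int) : {poly int} :=
  mmap (fun c : int => c%:P)
       (fun i : 'I_n.+1 => match unlift ord0 i with
                           | None => 'X
                           | Some j => (a j)%:P end) F.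

(* Main.v *)
Require Import Defs.
From HB Require Import structures.
From mathcomp Require Import all_boot all_order all_algebra all_field.
From mathcomp Require Import mpoly.
From mathcomp Require Import zify ring lra.
Set Implicit Arguments. Unset Strict Implicit. Unset Printing Implicit Defensive.
Import Order.TTheory GRing.Theory Num.Theory.
Local Open Scope ring_scope.
Lemma taylor2 (f : {poly int}) (a b : int) :
  exists e : int, f.[a + b] = f.[a] + b * (f^`()).[a] + b ^+ 2 * e.
Proof.
elim/poly_ind: f => [|g c [e IH]].
  by exists 0; rewrite deriv0 !horner0; ring.
exists ((g^`()).[a] + e * (a + b)).
rewrite derivMXaddC !(hornerE, IH); ring.
Qed.

Lemma taylor1 (f : {poly int}) (a b : int) :
  exists e : int, f.[a + b] = f.[a] + b * e.
Proof.
have [e ->] := taylor2 f a b; exists ((f^`()).[a] + b * e); ring.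
Qed.
Lemma hensel (f : {poly int}) (p : nat) (r T : int) : prime p ->
  (p%:Z %| f.[r])%Z -> ~~ (p%:Z %| (f^`()).[r])%Z -> (p%:Z %| T)%Z ->
  forall K : nat, exists x w : int, f.[x] = T + (p%:Z) ^+ K.+1 * w.
Proof.
move=> pp hfr hf'r hT.
have cop : coprimez (f^`()).[r] p.
  by rewrite coprimez_sym coprimezE prime_coprime.
have [[s v] /= Hsv] := coprimezP _ _ cop.
suff H : forall K : nat, exists x z w : int, x = r + p%:Z * z /\ f.[x] = T + (p%:Z) ^+ K.+1 * w.
  by move=> K; have [x [z [w [_ ?]]]] := H K; exists x, w.
elim=> [|K [x [z [w [Hx Hw]]]]].
  move/dvdzP: hfr => [a Ha]; move/dvdzP: hT => [b Hb].
  exists r, 0, (a - b); split; first by ring.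
  by rewrite Ha Hb expr1; ring.
have [h Hh] := taylor1 f^`() r (p%:Z * z).
have [e He] := taylor2 f x ((p%:Z) ^+ K.+1 * (- w * s)).
exists (x + (p%:Z) ^+ K.+1 * (- w * s)), (z + (p%:Z) ^+ K * (- w * s)), (w * v - w * s * z * h + (p%:Z) ^+ K * ((w * s) ^+ 2 * e)).
split; first by rewrite Hx exprS; ring.
rewrite He Hw -Hx in Hh *; rewrite Hh.
have key : w = w * s * (f^`()).[r] + w * v * p%:Z.
  by rewrite -{1}[w]mulr1 -Hsv; ring.
rewrite {1}key !exprS; set P := _ ^+ K; ring.
Qed.
Lemma nonroot_int (g : {poly int}) : g != 0 -> exists m : int, g.[m] != 0.
Proof.
move=> g0; set rs := [seq Posz i | i <- iota 0 (size g)].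
case: (boolP (all (root g) rs)) => [H|].
  have := roots_geq_poly_eq0 H; rewrite map_inj_uniq ?iota_uniq; last by move=> a b [].
  by rewrite size_map size_iota leqnn => /(_ isT isT) g00; rewrite g00 eqxx in g0.
by move/allPn => [m _ Hm]; exists m.
Qed.

Lemma schur (f : {poly int}) (D : int) : D != 0 -> (1 < size f)%N ->
  forall N : nat, exists (p : nat) (r : int),
    (N < p)%N /\ prime p /\ ~~ (p%:Z %| D)%Z /\ (p%:Z %| f.[r])%Z.
Proof.
move=> D0 sf N.
have D0' : (0 < `|D|)%N by rewrite absz_gt0.
have [c0|c0] := eqVneq f.[0] 0.
  have [p Hp pp] := prime_above (N + `|D|).
  exists p, 0; split; first by lia.
  split => //; split; last by rewrite c0 dvdz0.
  rewrite dvdzE /=; apply/negP => /(dvdn_leq D0'); lia.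
set c := f.[0] in c0.
set P : nat := (6 * N`! * `|D|)%N.
have P0 : (0 < P)%N by rewrite /P !muln_gt0 fact_gt0 D0'.
set q : {poly int} := (c * P%:Z)%:P * 'X.
have sq : size q = 2%N.
  rewrite /q mul_polyC size_scale ?size_polyX //.
  by rewrite mulf_neq0 //; apply/negP => /eqP [] ; lia.
have g0 : f \Po q - c%:P != 0.
  apply/negP => /eqP H.
  have : size (f \Po q) = size (c%:P) by move/subr0_eq: H => ->.
  by rewrite size_comp_poly2 // => E; move: sf; rewrite E size_polyC; case: (c != 0).
have [m Hm] := nonroot_int g0.
rewrite hornerD hornerN horner_comp /q hornerMX hornerC hornerC in Hm.
have [e He] := taylor1 f 0 (c * P%:Z * m).
rewrite add0r -/c in He.
set H := 1 + P%:Z * m * e.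
have Hf : f.[c * P%:Z * m] = c * H by rewrite He /H; ring.
have H1 : H != 1.
  apply: contra Hm => /eqP H1; rewrite Hf H1; apply/eqP; ring.
have HP : H = 1 + 6 * ((N`! * `|D|)%:Z * m * e).
  by rewrite /H /P !PoszM; ring.
have Hgt : (1 < `|H|)%N.
  move: H1 HP; set y := (_ * m * e); clearbody H; clear. lia.
set p := pdiv `|H|.
have pp : prime p by apply: pdiv_prime.
have pH : (p%:Z %| H)%Z by rewrite dvdzE /= pdiv_dvd.
have pP : ~~ (p %| P)%N.
  apply/negP => pP.
  have : (p%:Z %| H - P%:Z * m * e)%Z.
    by apply: rpredB => //; rewrite -mulrA dvdz_mulr // dvdzE.
  rewrite /H addrK dvdzE /= dvdn1 => /eqP p1.
  by rewrite p1 in pp.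
exists p, (c * P%:Z * m); split.
  rewrite ltnNge; apply: contra pP => pN.
  by rewrite /P -mulnA; apply: dvdn_mull; apply: dvdn_mulr; rewrite dvdn_fact // prime_gt0.
split => //; split.
  rewrite dvdzE; apply: contra pP => pD.
  by rewrite /P; apply: dvdn_mull.
by rewrite Hf dvdz_mull.
Qed.
Lemma val_frac (p : nat) (a b : int) : a != 0 -> b != 0 ->
  padic_val p (a%:~R / b%:~R) = (logn p `|a|)%:Z - (logn p `|b|)%:Z.
Proof.
move=> a0 b0; set z : rat := _ / _.
have z0 : z != 0 by rewrite /z mulf_neq0 ?invr_eq0 ?intr_eq0.
have nz : numq z != 0 by rewrite numq_eq0.
have dz : denq z != 0 by rewrite denq_eq0.
have E : numq z * b = a * denq z.
  apply/eqP; rewrite -(eqr_int rat) !rmorphM /=.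
  rewrite -eqr_div ?intr_eq0 // divq_num_den //.
have E' : (`|numq z| * `|b| = `|a| * `|denq z|)%N by rewrite -!abszM E.
have := congr1 (logn p) E'.
rewrite !lognM ?absz_gt0 //.
rewrite /padic_val; lia.
Qed.
Lemma val_bound (p K M : nat) (A B : int) : prime p -> A != 0 -> B != 0 ->
  ~~ (p%:Z %| B)%Z ->
  (K%:Z - M%:Z <= padic_val p (((p%:Z) ^+ K * A)%:~R / ((p%:Z) ^+ M * B)%:~R)).
Proof.
move=> pp A0 B0 pB.
have p0 : (p%:Z) != 0 by apply/negP => /eqP [] p0; rewrite p0 in pp.
rewrite val_frac ?mulf_neq0 ?expf_neq0 //.
have pg : (0 < p)%N by apply: prime_gt0.
rewrite !abszM !abszX [`|p%:Z|%N]/=.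
have pK : forall k, (0 < p ^ k)%N by move=> k; rewrite expn_gt0 pg.
rewrite (lognM _ (pK K)) ?absz_gt0 // (lognM _ (pK M)) ?absz_gt0 //.
rewrite !pfactorK //.
rewrite (@logn_coprime p `|B|); last by rewrite prime_coprime.
lia.
Qed.
Lemma meval_homog (r d : nat) (F : {mpoly int[r]}) (c : int) (v : 'I_r -> int) :
  F \is d.-homog -> F.@[fun i => c * v i] = c ^+ d * F.@[v].
Proof.
move=> hF; rewrite !mevalE mulr_sumr; apply: eq_big_seq => m mF.
have : mdeg m = d := dhomog_mf hF mF. rewrite mdegE => <-.
under eq_bigr do rewrite exprMn.
rewrite big_split /= prodrXr; ring.
Qed.

Definition vec (n : nat) (a : 'I_n -> int) (t : int) : 'I_n.+1 -> int :=
  fun i => match unlift ord0 i with None => t | Some j => a j end.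

Lemma spec_eval (n : nat) (F : {mpoly int[n.+1]}) (a : 'I_n -> int) (t : int) :
  (specialize_first F a).[t] = F.@[vec a t].
Proof.
rewrite /specialize_first /mmap mevalE horner_sum; apply: eq_bigr => m _.
rewrite hornerM hornerC /mmap1 horner_prod; congr (_ * _); apply: eq_bigr => i _.
rewrite horner_exp /vec; case: (unlift ord0 i) => [j|]; by rewrite ?hornerC ?hornerX.
Qed.
Lemma disc_coprime (f : {poly int}) : disc f != 0 ->
  (1 < size f)%N /\
  coprimep (map_poly (fun z : int => z%:~R : algC) f)
           (map_poly (fun z : int => z%:~R : algC) f)^`().
Proof.
rewrite /disc; set g := map_poly _ f.
case: (closed_field_poly_normal g) => rs /= Hg.
case: ifP => [_|m0]; first by rewrite eqxx.
move=> H.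
have sf : (1 < size f)%N by move: m0; case: (size f) => [|[|k]].
split => //.
have f0 : f != 0 by rewrite -size_poly_gt0; lia.
have lc0 : lead_coef g != 0.
  rewrite lead_coef_map_inj ?intr_eq0 ?lead_coef_eq0 //.
  exact: intr_inj.
have urs : uniq rs.
  have [//|/(uniqPn 0) [i [j [ij js eqij]]]] := boolP (uniq rs).
  exfalso; move/negP: H; apply.
  rewrite mulf_eq0; apply/orP; right.
  apply/prodf_eq0; exists (Ordinal (ltn_trans ij js)) => //.
  apply/prodf_eq0; exists (Ordinal js) => //=.
  by rewrite eqij subrr expr0n.
apply: Pdiv.ClosedField.root_coprimep => x; rewrite Hg rootZ // root_prod_XsubC => xr.
rewrite derivZ hornerZ mulf_eq0 negb_or lc0 /=.
rewrite (perm_big _ (perm_to_rem xr)) big_cons derivM derivXsubC mul1r.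
rewrite hornerD hornerM hornerXsubC subrr mul0r addr0.
have := root_prod_XsubC (rem x rs) x; by rewrite mem_rem_uniqF // /root => /negbT.
Qed.

Lemma disc_bezout (f : {poly int}) : disc f != 0 ->
  (1 < size f)%N /\ exists (U V : {poly int}) (D : int),
    D != 0 /\ U * f + V * f^`() = D%:P.
Proof.
move=> /disc_coprime [sf cop]; split => //.
set fQ := map_poly (intr : int -> rat) f.
have Eg : map_poly (fun z : int => z%:~R : algC) f = map_poly ratr fQ.
  rewrite /fQ -map_poly_comp; apply: eq_map_poly => z /=; by rewrite ratr_int.
rewrite Eg deriv_map coprimep_map in cop.
have [[u1 u2] /= Hu] := Bezout_eq1_coprimepP _ _ cop.
have [U [a a0 Ha]] := rat_poly_scale u1.
have [V [b b0 Hb]] := rat_poly_scale u2.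
exists (b%:P * U), (a%:P * V), (a * b); split; first by rewrite mulf_neq0.
apply: (@map_inj_poly _ _ (intr : int -> rat)); first exact: intr_inj.
  by [].
rewrite rmorphD !rmorphM /= !map_polyC /= -/fQ -deriv_map -/fQ.
have EU : map_poly (intr : int -> rat) U = a%:~R *: u1.
  by rewrite Ha scalerA mulfV ?intr_eq0 // scale1r.
have EV : map_poly (intr : int -> rat) V = b%:~R *: u2.
  by rewrite Hb scalerA mulfV ?intr_eq0 // scale1r.
rewrite EU EV -!mul_polyC.
have : (a%:~R * b%:~R)%:P * (u1 * fQ + u2 * fQ^`()) = (a%:~R * b%:~R : rat)%:P.
  by rewrite Hu mulr1.
rewrite rmorphM /= => <-.
ring.
Qed.

Lemma PoszX_ (p a : nat) : Posz (p ^ a)%N = (Posz p) ^+ a.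
Proof. elim: a => [|a IH]; first by []. by rewrite expnS PoszM IH exprS. Qed.

Lemma k_bound (k : int) (M : nat) : k <= (M + `|k| + 1).+1%:Z - M%:Z.
Proof. lia. Qed.

Theorem theorem1p1 (n d : nat) (F : {mpoly int[n.+1]}) :
  F != 0 -> F \is d.-homog -> (1 < d)%N ->
  (exists a : 'I_n -> int, disc (specialize_first F a) != 0) ->
  forall N : nat, exists p : nat,
    (N < p)%N /\ prime p /\ padic_dense p (ratio_set F).
Proof.
move=> _ hom d1 [a ha] N.
set f := specialize_first F a in ha.
have [sf [U [V [D [D0 HB]]]]] := disc_bezout ha.
have [p [r [Np [pp [pD pfr]]]]] := schur D0 sf N.
have pf'r : ~~ (p%:Z %| (f^`()).[r])%Z.
  apply: contra pD => H.
  have := congr1 (fun g => g.[r]) HB; rewrite /= hornerD !hornerM hornerC => <-.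
  by apply: rpredD; apply: dvdz_mull.
exists p; split => //; split => //.
move=> q k.
case: d hom d1 => [|d'] // hom _.
set nu := numq q; set de := denq q.
have de0 : (0 < `|de|)%N by rewrite absz_gt0 denq_eq0.
set al := logn p `|de|.
have [be cbe Hbe] := pfactor_coprime pp de0.
set M := (al * d' + al + 1 + al)%N.
set K1 := (M + `|k| + 1)%N.
have pT : (p%:Z %| p%:Z * be%:Z)%Z by apply: dvdz_mulr.
have [y0 [w Hy0]] := hensel pp pfr pf'r pT K1.
have [x0 [w' Hx0]] := hensel pp pfr pf'r (T := nu * (p%:Z) ^+ (al * d') * p) (dvdz_mull _ (dvdzz _)) K1.
set X := vec a x0.
set Y := fun i => (p%:Z) ^+ al * vec a y0 i.
have FX : F.@[X] = f.[x0] by rewrite spec_eval.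
have FY : F.@[Y] = ((p%:Z) ^+ al) ^+ d'.+1 * f.[y0] by rewrite (meval_homog _ _ hom) spec_eval.
have p0 : p%:Z != 0 by apply/negP => /eqP [] p0; rewrite p0 in pp.
set Pa := (p%:Z) ^+ al.
set Pc := Pa ^+ d'.
set PK1 := (p%:Z) ^+ K1.
have Ede : de = be%:Z * Pa.
  rewrite -[de]gez0_abs ?denq_ge0 // Hbe PoszM /Pa.
  by rewrite PoszX_.
have EPc : (p%:Z) ^+ (al * d') = Pc by rewrite /Pc /Pa exprM.
rewrite EPc exprS -/PK1 in Hx0.
rewrite exprS -/PK1 in Hy0.
rewrite exprS -/Pc in FY.
have pbe : ~~ (p%:Z %| be%:Z)%Z by rewrite dvdzE /= -prime_coprime.
have pB1 : ~~ (p%:Z %| be%:Z + PK1 * w)%Z.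
  apply/negP => H.
  have : (p%:Z %| be%:Z)%Z.
    have -> : be%:Z = be%:Z + PK1 * w - PK1 * w by ring.
    apply: rpredB => //; apply: dvdz_mulr.
    by rewrite /PK1 /K1 addn1 exprS dvdz_mulr.
  by rewrite (negPf pbe).
set B := (be%:Z + PK1 * w) * be%:Z.
have pB : ~~ (p%:Z %| B)%Z.
  by rewrite /B dvdzE abszM Euclid_dvdM // negb_or -!dvdzE pB1.
have B0 : B != 0 by apply: contra pB => /eqP ->; rewrite dvdz0.
have FY0 : F.@[Y] = Pa * Pc * p%:Z * (be%:Z + PK1 * w) by rewrite FY Hy0; ring.
have FYn0 : F.@[Y] != 0.
  rewrite FY0 !mulf_neq0 ?expf_neq0 //.
  by apply: contra pB1 => /eqP ->; rewrite dvdz0.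
have de0' : de != 0 by rewrite denq_eq0.
exists (F.@[X]%:~R / F.@[Y]%:~R); split.
  by exists X, Y; split.
set s := _ / _.
have [->|sq] := eqVneq s q; first by left.
right.
set A := Pa * be%:Z * w' - nu * Pc * Pa * w.
have E1 : F.@[X] * de - nu * F.@[Y] = (p%:Z) ^+ K1.+1 * A.
  by rewrite FX Hx0 FY0 Ede /A exprS -/PK1; ring.
have E2 : F.@[Y] * de = (p%:Z) ^+ M * B.
  by rewrite FY0 Ede /B /M !exprD expr1 -/Pa exprM -/Pa -/Pc; ring.
have Esq : s - q = (F.@[X] * de - nu * F.@[Y])%:~R / (F.@[Y] * de)%:~R.
  rewrite /s -[q in LHS]divq_num_den -/nu -/de rmorphB !rmorphM /=.
  field; rewrite !intr_eq0; apply/andP; split => //.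
have A0 : A != 0.
  apply: contra sq => /eqP A0; rewrite -subr_eq0 Esq E1 A0 mulr0 mul0r //.
rewrite Esq E1 E2.
have HV := val_bound K1.+1 M pp A0 B0 pB.
apply: le_trans HV; exact: k_bound.
Qed.
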